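(* Let $\alpha\in(0,1]$ and $\lambda\in\mathbb{C}$. There exists $0\ne\phi\in C^\infty[-1,1]$ solving \[ \Big(\lambda^2+\lambda-\frac{2\alpha\lambda}{1+\sqrt{1-\alpha}\,y}\Big)\phi+\Big(2\lambda+2-\frac{2\alpha}{1+\sqrt{1-\alpha}\,y}\Big)y\,\phi'+(y^2-1)\phi''=0 \] if and only if there exists $0\ne\phi\in C^\infty[-1,1]$ solving \[ (\lambda^2-\lambda)\phi+\big(2\lambda y+2\sqrt{1-\alpha}\big)\phi'+(y^2-1)\phi''=0. \] That is, the eigenvalues of $\mathbf{L}_\alpha$ coincide with the eigenvalues of $\mathbf{L}'_\alpha$.
   Context: $\lambda$ is called an eigenvalue of $\mathbf{L}_\alpha$ (the linearisation of $\partial_{tt}u-\partial_{xx}u=(\partial_tu)^2$ in self-similar variables around the solution $U_{\alpha,\infty,\kappa}(s,y)=\alpha s-\alpha\ln(1+\sqrt{1-\alpha}y)+\kappa$) if the first ODE has a nonzero $C^\infty[-1,1]$ solution, and an eigenvalue of $\mathbf{L}'_\alpha$ if the second ODE has a nonzero $C^\infty[-1,1]$ solution. *)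

(* Defs.v *)
From Stdlib Require Import Reals.
From Coquelicot Require Import Coquelicot.
Open Scope R_scope.

Definition I11 (y : R) : Prop := -1 <= y <= 1.

Definition has_deriv_within_I (f g : R -> C) (y : R) : Prop :=
  forall eps : R, 0 < eps -> exists delta : R, 0 < delta /\
    forall h : R, h <> 0 -> Rabs h < delta -> I11 (y + h) ->
      Cmod (Cminus (Cdiv (Cminus (f (y + h)) (f y)) (RtoC h)) (g y)) < eps.

(* D is a tower of derivatives of D 0 on [-1,1]: D (S n) is the derivative
   of D n on [-1,1].  A function phi is in C^oo[-1,1] iff it is D 0 for such a tower. *)
Definition deriv_tower (D : nat -> R -> C) : Prop :=
  forall (n : nat) (y : R), I11 y -> has_deriv_within_I (D n) (D (S n)) y.

Definition smooth_I (phi : R -> C) : Prop :=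
  exists D : nat -> R -> C, deriv_tower D /\ forall y, I11 y -> D O y = phi y.

Definition nonzero_I (phi : R -> C) : Prop := exists y, I11 y /\ phi y <> RtoC 0.

Definition ode1 (alpha : R) (lam : C) (phi phi1 phi2 : R -> C) : Prop :=
  forall y : R, I11 y ->
    let q := RtoC (1 + sqrt (1 - alpha) * y) in
    (Cplus (Cplus
      (Cmult (Cminus (Cplus (Cmult lam lam) lam)
                     (Cdiv (Cmult (RtoC (2 * alpha)) lam) q)) (phi y))
      (Cmult (Cmult (Cminus (Cplus (Cmult (RtoC 2) lam) (RtoC 2))
                            (Cdiv (RtoC (2 * alpha)) q)) (RtoC y)) (phi1 y)))
      (Cmult (RtoC (y ^ 2 - 1)) (phi2 y))) = RtoC 0.

Definition ode2 (alpha : R) (lam : C) (phi phi1 phi2 : R -> C) : Prop :=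
  forall y : R, I11 y ->
    (Cplus (Cplus
      (Cmult (Cminus (Cmult lam lam) lam) (phi y))
      (Cmult (Cplus (Cmult (RtoC 2) (Cmult lam (RtoC y))) (RtoC (2 * sqrt (1 - alpha))))
             (phi1 y)))
      (Cmult (RtoC (y ^ 2 - 1)) (phi2 y))) = RtoC 0.

Definition eigen_L (alpha : R) (lam : C) : Prop :=
  exists D : nat -> R -> C, deriv_tower D /\ nonzero_I (D O) /\
    ode1 alpha lam (D O) (D 1%nat) (D 2%nat).

Definition eigen_L' (alpha : R) (lam : C) : Prop :=
  exists D : nat -> R -> C, deriv_tower D /\ nonzero_I (D O) /\
    ode2 alpha lam (D O) (D 1%nat) (D 2%nat).

(* Main.v *)
Require Import Defs.
From Stdlib Require Import Reals Lra.
From Coquelicot Require Import Coquelicot.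
Open Scope R_scope.

Definition small (y : R) (F : R -> C) : Prop :=
  forall eps, 0 < eps -> exists d, 0 < d /\
    forall h, Rabs h < d -> I11 (y + h) -> Cmod (F h) <= eps * Rabs h.
Definition tiny (y : R) (X : R -> C) : Prop :=
  forall eps, 0 < eps -> exists d, 0 < d /\
    forall h, Rabs h < d -> I11 (y + h) -> Cmod (X h) <= eps.
Definition bnd (y : R) (X : R -> C) : Prop :=
  exists K d, 0 < d /\ forall h, Rabs h < d -> I11 (y + h) -> Cmod (X h) <= K.

Definition Do (f g : R -> C) (y : R) : Prop :=
  small y (fun h => (f (y + h)%R - f y - RtoC h * g y)%C).

Lemma Cmod_minus_le (x z : C) : Cmod (x - z)%C <= Cmod x + Cmod z.
Proof. unfold Cminus. eapply Rle_trans. apply Cmod_triangle. rewrite Cmod_opp. lra. Qed.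

Lemma small_ext y F G : (forall h, I11 (y + h) -> F h = G h) -> small y F -> small y G.
Proof.
  intros E S eps He. destruct (S eps He) as [d [Hd H]]. exists d; split; auto.
  intros h Hh Hi. rewrite <- E by auto. auto.
Qed.

Lemma small_plus y F G : small y F -> small y G -> small y (fun h => F h + G h)%C.
Proof.
  intros SF SG eps He.
  destruct (SF (eps/2)) as [d1 [Hd1 H1]]; [lra|].
  destruct (SG (eps/2)) as [d2 [Hd2 H2]]; [lra|].
  exists (Rmin d1 d2); split; [apply Rmin_pos; auto|].
  intros h Hh Hi. eapply Rle_trans; [apply Cmod_triangle|].
  assert (A1 := H1 h ltac:(eapply Rlt_le_trans; [apply Hh| apply Rmin_l]) Hi).
  assert (A2 := H2 h ltac:(eapply Rlt_le_trans; [apply Hh| apply Rmin_r]) Hi).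
  lra.
Qed.

Lemma small_bnd y X F : bnd y X -> small y F -> small y (fun h => X h * F h)%C.
Proof.
  intros [K [d0 [Hd0 HB]]] SF eps He.
  assert (HK : 0 < Rabs K + 1) by (pose proof (Rabs_pos K); lra).
  destruct (SF (eps / (Rabs K + 1))) as [d1 [Hd1 H1]]; [apply Rdiv_lt_0_compat; lra|].
  exists (Rmin d0 d1); split; [apply Rmin_pos; auto|].
  intros h Hh Hi. rewrite Cmod_mult.
  assert (A1 := H1 h ltac:(eapply Rlt_le_trans; [apply Hh| apply Rmin_r]) Hi).
  assert (A0 := HB h ltac:(eapply Rlt_le_trans; [apply Hh| apply Rmin_l]) Hi).
  assert (Cmod (X h) <= Rabs K + 1) by (pose proof (Rle_abs K); lra).
  pose proof (Cmod_ge_0 (X h)). pose proof (Cmod_ge_0 (F h)). pose proof (Rabs_pos h).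
  apply Rle_trans with ((Rabs K + 1) * (eps / (Rabs K + 1) * Rabs h)).
  - apply Rmult_le_compat; auto.
  - right. field. lra.
Qed.

Lemma bnd_const y k : bnd y (fun _ => k).
Proof. exists (Cmod k), 1. split; [lra|]. intros; lra. Qed.

Lemma small_scal y k F : small y F -> small y (fun h => k * F h)%C.
Proof. intros; apply (small_bnd y (fun _ => k)); auto. apply bnd_const. Qed.

Lemma small_tiny y X : tiny y X -> small y (fun h => RtoC h * X h)%C.
Proof.
  intros T eps He. destruct (T eps He) as [d [Hd H]]. exists d; split; auto.
  intros h Hh Hi. rewrite Cmod_mult, Cmod_R.
  rewrite Rmult_comm. apply Rmult_le_compat_r; [apply Rabs_pos| auto].
Qed.

Lemma Do_tiny f g y : Do f g y -> tiny y (fun h => f (y + h)%R - f y)%C.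
Proof.
  intros D eps He. destruct (D 1 ltac:(lra)) as [d [Hd H]].
  set (K := Cmod (g y) + 1).
  assert (HK : 0 < K) by (unfold K; pose proof (Cmod_ge_0 (g y)); lra).
  exists (Rmin d (eps / K)); split; [apply Rmin_pos; auto; apply Rdiv_lt_0_compat; lra|].
  intros h Hh Hi.
  assert (Hh1 : Rabs h < d) by (eapply Rlt_le_trans; [apply Hh| apply Rmin_l]).
  assert (Hh2 : Rabs h < eps / K) by (eapply Rlt_le_trans; [apply Hh| apply Rmin_r]).
  assert (A := H h Hh1 Hi).
  replace (f (y + h)%R - f y)%C with ((f (y + h)%R - f y - RtoC h * g y) + RtoC h * g y)%C by ring.
  eapply Rle_trans; [apply Cmod_triangle|]. rewrite Cmod_mult, Cmod_R.
  apply Rle_trans with (Rabs h * K).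
  - unfold K. lra.
  - apply Rmult_lt_compat_r with (r := K) in Hh2; auto.
    replace (eps / K * K) with eps in Hh2 by (field; lra). lra.
Qed.

Lemma tiny_bnd y X : tiny y X -> bnd y X.
Proof. intros T. destruct (T 1 ltac:(lra)) as [d [Hd H]]. exists 1, d. split; auto. Qed.

Lemma Do_bnd f g y : Do f g y -> bnd y (fun h => f (y + h)%R).
Proof.
  intros D. destruct (Do_tiny f g y D 1 ltac:(lra)) as [d [Hd H]].
  exists (Cmod (f y) + 1), d. split; auto. intros h Hh Hi.
  replace (f (y + h)%R) with ((f (y + h)%R - f y) + f y)%C by ring.
  eapply Rle_trans; [apply Cmod_triangle|]. specialize (H h Hh Hi). lra.
Qed.

Lemma Do_plus f f' g g' G y : Do f f' y -> Do g g' y -> G y = (f' y + g' y)%C ->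
  Do (fun x => f x + g x)%C G y.
Proof.
  intros Df Dg E. unfold Do. rewrite E.
  eapply small_ext; [|apply (small_plus _ _ _ Df Dg)].
  intros h _. simpl. ring.
Qed.

Lemma Do_scal f f' k G y : Do f f' y -> G y = (k * f' y)%C -> Do (fun x => k * f x)%C G y.
Proof.
  intros Df E. unfold Do. rewrite E.
  eapply small_ext; [|apply (small_scal _ k _ Df)].
  intros h _. simpl. ring.
Qed.

Lemma Do_mult f f' g g' G y : Do f f' y -> Do g g' y ->
  G y = (f' y * g y + f y * g' y)%C -> Do (fun x => f x * g x)%C G y.
Proof.
  intros Df Dg E. unfold Do. rewrite E.
  eapply small_ext; [| apply (small_plus _ _ _ (small_plus _ _ _
     (small_bnd _ _ _ (Do_bnd g g' y Dg) Df) (small_scal _ (f y) _ Dg))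
     (small_scal _ (f' y) _ (small_tiny _ _ (Do_tiny g g' y Dg))))].
  intros h _. simpl. ring.
Qed.

Lemma Do_ext f g f2 g2 y : (forall x, I11 x -> f x = f2 x) -> I11 y -> g y = g2 y ->
  Do f g y -> Do f2 g2 y.
Proof.
  intros E Hy Eg D. unfold Do. eapply small_ext; [|apply D].
  intros h Hi. simpl. rewrite <- !E, Eg by auto. reflexivity.
Qed.

Lemma hd_Do f g y : has_deriv_within_I f g y <-> Do f g y.
Proof.
  split.
  - intros H eps He. destruct (H eps He) as [d [Hd Hh]]. exists d; split; auto.
    intros h Hr Hi. destruct (Req_dec h 0) as [->|Hn].
    + rewrite Rplus_0_r. replace (f y - f y - RtoC 0 * g y)%C with (RtoC 0) by ring.
      rewrite Cmod_0, Rabs_R0. lra.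
    + specialize (Hh h Hn Hr Hi).
      assert (HC : RtoC h <> RtoC 0) by (intro Q; apply Hn; injection Q; auto).
      replace (f (y + h)%R - f y - RtoC h * g y)%C with
        (RtoC h * ((f (y + h)%R - f y) / RtoC h - g y))%C by (field; auto).
      rewrite Cmod_mult, Cmod_R. rewrite Rmult_comm. apply Rmult_le_compat_r; [apply Rabs_pos| lra].
  - intros H eps He. destruct (H (eps/2) ltac:(lra)) as [d [Hd Hh]]. exists d; split; auto.
    intros h Hn Hr Hi. specialize (Hh h Hr Hi).
    assert (HC : RtoC h <> RtoC 0) by (intro Q; apply Hn; injection Q; auto).
    replace ((f (y + h)%R - f y) / RtoC h - g y)%C with
        ((f (y + h)%R - f y - RtoC h * g y) / RtoC h)%C by (field; auto).
    rewrite Cmod_div by auto. rewrite Cmod_R.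
    assert (0 < Rabs h) by (apply Rabs_pos_lt; auto).
    apply Rmult_lt_reg_r with (Rabs h); auto. unfold Rdiv.
    rewrite Rmult_assoc, Rinv_l by lra. nra.
Qed.

Lemma Cmod_small_0 (z : C) : (forall eps, 0 < eps -> Cmod z <= eps) -> z = RtoC 0.
Proof.
  intros H. apply Cmod_eq_0. pose proof (Cmod_ge_0 z).
  destruct (Req_dec (Cmod z) 0) as [E|E]; auto.
  specialize (H (Cmod z / 2) ltac:(lra)). lra.
Qed.

Lemma Do_unique f g1 g2 y : I11 y -> Do f g1 y -> Do f g2 y -> g1 y = g2 y.
Proof.
  intros Hy D1 D2.
  assert (Z : (g1 y - g2 y)%C = RtoC 0).
  { apply Cmod_small_0. intros eps He.
    destruct (D1 (eps/2) ltac:(lra)) as [d1 [Hd1 H1]].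
    destruct (D2 (eps/2) ltac:(lra)) as [d2 [Hd2 H2]].
    set (r := Rmin 1 (Rmin d1 d2 / 2)).
    assert (Hr0 : 0 < r) by (unfold r; apply Rmin_pos; [lra| apply Rdiv_lt_0_compat; [apply Rmin_pos|]; lra]).
    assert (Hr1 : r <= 1) by apply Rmin_l.
    assert (Hr2 : r < d1 /\ r < d2).
    { pose proof (Rmin_r 1 (Rmin d1 d2 / 2)). pose proof (Rmin_l d1 d2). pose proof (Rmin_r d1 d2).
      fold r in H. split; lra. }
    destruct Hy as [Hy1 Hy2].
    assert (Hex : exists h, Rabs h = r /\ I11 (y + h)).
    { destruct (Rle_dec y 0).
      - exists r. rewrite Rabs_pos_eq by lra. split; auto. split; lra.
      - exists (- r). rewrite Rabs_Ropp, Rabs_pos_eq by lra. split; auto. split; lra. }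
    destruct Hex as [h [Hh Hi]]. destruct Hr2 as [Hr2 Hr3].
    specialize (H1 h ltac:(lra) Hi). specialize (H2 h ltac:(lra) Hi).
    assert (Cmod (RtoC h * (g1 y - g2 y))%C <= eps * Rabs h).
    { replace (RtoC h * (g1 y - g2 y))%C with
        (- (f (y + h)%R - f y - RtoC h * g1 y) + (f (y + h)%R - f y - RtoC h * g2 y))%C by ring.
      eapply Rle_trans; [apply Cmod_triangle|]. rewrite Cmod_opp. lra. }
    rewrite Cmod_mult, Cmod_R in H. rewrite Hh in H.
    rewrite Rmult_comm in H. apply Rmult_le_reg_r in H; auto. }
  apply (f_equal (fun z => z + g2 y)%C) in Z. ring_simplify in Z. rewrite Z. ring.
Qed.

Lemma dpl_o mu y d : derivable_pt_lim mu y d -> forall e, 0 < e -> exists dl, 0 < dl /\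
  forall h, Rabs h < dl -> Rabs (mu (y + h) - mu y - h * d) <= e * Rabs h.
Proof.
  intros D e He. destruct (D e He) as [dl Hdl]. exists dl; split; [apply cond_pos|].
  intros h Hh. destruct (Req_dec h 0) as [->|Hn].
  - rewrite Rplus_0_r. replace (mu y - mu y - 0 * d) with 0 by ring. rewrite Rabs_R0. lra.
  - specialize (Hdl h Hn Hh).
    replace (mu (y + h) - mu y - h * d) with (h * ((mu (y + h) - mu y) / h - d)) by (field; auto).
    rewrite Rabs_mult. rewrite Rmult_comm. apply Rmult_le_compat_r; [apply Rabs_pos| lra].
Qed.

Lemma Do_chain f f' mu d G y : derivable_pt_lim mu y d -> (forall x, I11 x -> I11 (mu x)) ->
  I11 y -> Do f f' (mu y) -> G y = (f' (mu y) * RtoC d)%C -> Do (fun x => f (mu x)) G y.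
Proof.
  intros Dm HI Hy Df E eps He. rewrite E.
  set (Kg := Cmod (f' (mu y)) + 1). set (Kd := Rabs d + 1).
  assert (HKg : 0 < Kg) by (unfold Kg; pose proof (Cmod_ge_0 (f' (mu y))); lra).
  assert (HKd : 0 < Kd) by (unfold Kd; pose proof (Rabs_pos d); lra).
  destruct (Df (eps / (2 * Kd))) as [df [Hdf Hf]]; [apply Rdiv_lt_0_compat; lra|].
  set (e1 := Rmin 1 (eps / (2 * Kg))).
  assert (He1 : 0 < e1) by (apply Rmin_pos; [lra| apply Rdiv_lt_0_compat; lra]).
  destruct (dpl_o mu y d Dm e1 He1) as [dm [Hdm Hm]].
  exists (Rmin dm (df / Kd)); split; [apply Rmin_pos; auto; apply Rdiv_lt_0_compat; lra|].
  intros h Hh Hi.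
  assert (Hh1 : Rabs h < dm) by (eapply Rlt_le_trans; [apply Hh| apply Rmin_l]).
  assert (Hh2 : Rabs h < df / Kd) by (eapply Rlt_le_trans; [apply Hh| apply Rmin_r]).
  set (k := mu (y + h) - mu y).
  assert (Hk : Rabs (k - h * d) <= e1 * Rabs h) by (apply Hm; auto).
  assert (He11 : e1 <= 1) by apply Rmin_l.
  assert (He12 : e1 <= eps / (2 * Kg)) by apply Rmin_r.
  assert (Hkb : Rabs k <= Kd * Rabs h).
  { replace k with ((k - h * d) + h * d) by ring.
    eapply Rle_trans; [apply Rabs_triang|]. rewrite Rabs_mult. unfold Kd.
    pose proof (Rabs_pos h). nra. }
  assert (Hkd : Rabs k < df).
  { apply Rmult_lt_compat_l with (r := Kd) in Hh2; auto.
    replace (Kd * (df / Kd)) with df in Hh2 by (field; lra). lra. }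
  assert (Hz : mu (y + h) = (mu y + k)%R) by (unfold k; ring).
  assert (HIz : I11 (mu y + k)) by (rewrite <- Hz; auto).
  specialize (Hf k Hkd HIz).
  replace (f (mu (y + h)%R) - f (mu y) - RtoC h * (f' (mu y) * RtoC d))%C with
    ((f (mu y + k)%R - f (mu y) - RtoC k * f' (mu y)) + f' (mu y) * RtoC (k - h * d))%C.
  2:{ rewrite Hz. rewrite RtoC_minus, RtoC_mult. ring. }
  eapply Rle_trans; [apply Cmod_triangle|]. rewrite Cmod_mult, Cmod_R.
  assert (A1 : eps / (2 * Kd) * Rabs k <= eps / 2 * Rabs h).
  { apply Rle_trans with (eps / (2 * Kd) * (Kd * Rabs h)).
    - apply Rmult_le_compat_l; auto. apply Rlt_le, Rdiv_lt_0_compat; lra.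
    - right. field. lra. }
  assert (A2 : Cmod (f' (mu y)) * Rabs (k - h * d) <= eps / 2 * Rabs h).
  { apply Rle_trans with (Kg * (eps / (2 * Kg) * Rabs h)).
    - pose proof (Rabs_pos h). pose proof (Cmod_ge_0 (f' (mu y))).
      apply Rmult_le_compat; auto. apply Rabs_pos. unfold Kg; lra.
      eapply Rle_trans; [apply Hk|]. apply Rmult_le_compat_r; auto.
    - right. field. lra. }
  lra.
Qed.

Lemma Cmod_le_re_im (z : C) : Cmod z <= Rabs (Re z) + Rabs (Im z).
Proof.
  unfold Cmod. rewrite <- (sqrt_Rsqr (Rabs (Re z) + Rabs (Im z))).
  2:{ pose proof (Rabs_pos (Re z)); pose proof (Rabs_pos (Im z)); lra. }
  apply sqrt_le_1_alt. unfold Rsqr. simpl.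
  pose proof (Rabs_pos (fst z)); pose proof (Rabs_pos (snd z)).

  unfold Re, Im. rewrite !Rmult_1_r. assert (A1: fst z * fst z <= Rabs (fst z) * Rabs (fst z)) by (rewrite <- Rabs_mult; apply Rle_abs). assert (A2: snd z * snd z <= Rabs (snd z) * Rabs (snd z)) by (rewrite <- Rabs_mult; apply Rle_abs). nra.
Qed.

Lemma Do_elem f l G y :
  derivable_pt_lim (fun x => Re (f x)) y (Re l) ->
  derivable_pt_lim (fun x => Im (f x)) y (Im l) -> G y = l -> Do f G y.
Proof.
  intros Dr Di E eps He. rewrite E.
  destruct (dpl_o _ _ _ Dr (eps/2) ltac:(lra)) as [d1 [Hd1 H1]].
  destruct (dpl_o _ _ _ Di (eps/2) ltac:(lra)) as [d2 [Hd2 H2]].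
  exists (Rmin d1 d2); split; [apply Rmin_pos; auto|].
  intros h Hh _.
  specialize (H1 h ltac:(eapply Rlt_le_trans; [apply Hh| apply Rmin_l])).
  specialize (H2 h ltac:(eapply Rlt_le_trans; [apply Hh| apply Rmin_r])).
  eapply Rle_trans; [apply Cmod_le_re_im|].
  replace (Re (f (y + h)%R - f y - RtoC h * l)%C) with (Re (f (y + h)) - Re (f y) - h * Re l).
  2:{ destruct (f (y + h)), (f y), l. unfold Re, RtoC; simpl. ring. }
  replace (Im (f (y + h)%R - f y - RtoC h * l)%C) with (Im (f (y + h)) - Im (f y) - h * Im l).
  2:{ destruct (f (y + h)), (f y), l. unfold Im, RtoC; simpl. ring. }
  lra.
Qed.

Definition ce (u v : R) : C := (exp u * cos v, exp u * sin v).
Definition cp (x : R) (c : C) : C := ce (Re c * ln x) (Im c * ln x).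

Lemma ce_add u1 v1 u2 v2 : ce (u1 + u2) (v1 + v2) = (ce u1 v1 * ce u2 v2)%C.
Proof.
  unfold ce, Cmult. simpl. rewrite exp_plus, cos_plus, sin_plus.
  f_equal; ring.
Qed.

Lemma cp_add x c1 c2 : cp x (c1 + c2)%C = (cp x c1 * cp x c2)%C.
Proof.
  unfold cp. rewrite <- ce_add. f_equal; destruct c1, c2; simpl; ring.
Qed.

Lemma cp_mul x1 x2 c : 0 < x1 -> 0 < x2 -> cp (x1 * x2) c = (cp x1 c * cp x2 c)%C.
Proof.
  intros H1 H2. unfold cp. rewrite <- ce_add. rewrite ln_mult by auto. f_equal; ring.
Qed.

Lemma ce_nz u v : ce u v <> RtoC 0.
Proof.
  unfold ce, RtoC. intro H. injection H. intros H1 H2.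
  pose proof (exp_pos u). pose proof (sin2_cos2 v). unfold Rsqr in *.
  apply Rmult_integral in H1. apply Rmult_integral in H2.
  destruct H1, H2; try lra. rewrite H1, H2 in *. lra.
Qed.

Lemma cp_nz x c : cp x c <> RtoC 0.
Proof. apply ce_nz. Qed.

Lemma cp_m1 x : 0 < x -> cp x (- RtoC 1)%C = RtoC (/ x).
Proof.
  intros H. unfold cp, ce, RtoC, Re, Im. simpl.
  replace (- (1) * ln x) with (- ln x) by ring. replace (- 0 * ln x) with 0 by ring.
  rewrite exp_Ropp, exp_ln, cos_0, sin_0 by auto. f_equal; ring.
Qed.

Lemma cp_0 x : cp x (RtoC 0) = RtoC 1.
Proof.
  unfold cp, ce, RtoC, Re, Im. simpl. rewrite !Rmult_0_l, exp_0, cos_0, sin_0. f_equal; ring.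
Qed.

Lemma cp_deriv_re b c y : 0 < 1 - b * y ->
  derivable_pt_lim (fun x => Re (cp (1 - b * x) c)) y
    (Re (RtoC (- b / (1 - b * y)) * c * cp (1 - b * y) c)%C).
Proof.
  intros H. destruct c as [cr ci]. apply is_derive_Reals.
  unfold cp, ce, Re, Im, RtoC, Cmult; simpl.
  auto_derive; [lra|]. replace (1 + - (b * y)) with (1 - b * y) by ring. field. lra.
Qed.

Lemma cp_deriv_im b c y : 0 < 1 - b * y ->
  derivable_pt_lim (fun x => Im (cp (1 - b * x) c)) y
    (Im (RtoC (- b / (1 - b * y)) * c * cp (1 - b * y) c)%C).
Proof.
  intros H. destruct c as [cr ci]. apply is_derive_Reals.
  unfold cp, ce, Re, Im, RtoC, Cmult; simpl.
  auto_derive; [lra|]. replace (1 + - (b * y)) with (1 - b * y) by ring. field. lra.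
Qed.

Fixpoint Cn (n : nat) (f : R -> C) : Prop :=
  match n with
  | O => True
  | S k => exists g, (forall y, I11 y -> Do f g y) /\ Cn k g
  end.

Lemma Cn_ext n : forall f f2, (forall x, I11 x -> f x = f2 x) -> Cn n f -> Cn n f2.
Proof.
  induction n as [|n IH]; simpl; auto.
  intros f f2 E [g [Dg Cg]]. exists g. split; auto.
  intros y Hy. eapply Do_ext; [apply E| auto | reflexivity | auto].
Qed.

Lemma Cn_S n : forall f, Cn (S n) f -> Cn n f.
Proof.
  induction n as [|n IH]; simpl; auto.
  intros f [g [Dg Cg]]. exists g. split; auto.
Qed.

Lemma Cn_plus n : forall f g, Cn n f -> Cn n g -> Cn n (fun x => f x + g x)%C.
Proof.
  induction n as [|n IH]; simpl; auto.
  intros f g [f' [Df Cf]] [g' [Dg Cg]]. exists (fun x => f' x + g' x)%C. split; auto.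
  intros y Hy. eapply Do_plus; eauto.
Qed.

Lemma Cn_scal n : forall k f, Cn n f -> Cn n (fun x => k * f x)%C.
Proof.
  induction n as [|n IH]; simpl; auto.
  intros k f [f' [Df Cf]]. exists (fun x => k * f' x)%C. split; auto.
  intros y Hy. eapply Do_scal; eauto.
Qed.

Fixpoint Nth (n : nat) (f g : R -> C) : Prop :=
  match n with
  | O => forall x, I11 x -> g x = f x
  | S k => exists h, Nth k f h /\ forall x, I11 x -> Do h g x
  end.

Lemma Nth_shift n : forall f f' g, (forall x, I11 x -> Do f f' x) -> Nth n f' g -> Nth (S n) f g.
Proof.
  induction n as [|n IH]; simpl.
  - intros f f' g D E. exists f. split; auto. intros x Hx.
    eapply Do_ext; [| auto | symmetry; apply E; auto | apply D; auto]. auto.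
  - intros f f' g D [h [Nh Dh]]. exists h. split; auto.
    specialize (IH f f' h D Nh). exact IH.
Qed.

Lemma Cn_Nth n : forall f, Cn n f -> exists g, Nth n f g.
Proof.
  induction n as [|n IH]; simpl.
  - intros f _. exists f. auto.
  - intros f [f' [D C']]. destruct (IH f' C') as [g Ng]. exists g.
    apply (Nth_shift n f f' g D Ng).
Qed.

Lemma Nth_unique n : forall f g1 g2, Nth n f g1 -> Nth n f g2 -> forall x, I11 x -> g1 x = g2 x.
Proof.
  induction n as [|n IH]; simpl.
  - intros f g1 g2 E1 E2 x Hx. rewrite E1, E2; auto.
  - intros f g1 g2 [h1 [N1 D1]] [h2 [N2 D2]] x Hx.
    apply (Do_unique h1); auto.
    eapply Do_ext; [| auto | reflexivity | apply D2; auto].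
    intros z Hz. symmetry. eapply IH; eauto.
Qed.

From Stdlib Require Import ClassicalEpsilon.

Lemma Cn_smooth f : (forall n, Cn n f) ->
  exists D, deriv_tower D /\ forall y, I11 y -> D O y = f y.
Proof.
  intros H.
  set (D := fun n => proj1_sig (constructive_indefinite_description _ (Cn_Nth n f (H n)))).
  assert (ND : forall n, Nth n f (D n)).
  { intros n. unfold D. destruct (constructive_indefinite_description _ _). simpl. auto. }
  exists D. split.
  - intros n y Hy. apply hd_Do. destruct (ND (S n)) as [h [Nh Dh]].
    eapply Do_ext; [| auto | reflexivity | apply Dh; auto].
    intros z Hz. eapply Nth_unique; eauto.
  - apply (ND O).
Qed.

Lemma tower_Cn D : deriv_tower D -> forall n k, Cn n (D k).
Proof.
  intros T n. induction n as [|n IH]; simpl; auto.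
  intros k. exists (D (S k)). split; auto.
  intros y Hy. apply hd_Do. apply T; auto.
Qed.

Definition mob (b y : R) : R := (y - b) / (1 - b * y).
Definition Eb (b : R) (c : C) (y : R) : C := cp (1 - b * y) c.

Lemma m_pos b y : -1 < b < 1 -> I11 y -> 0 < 1 - b * y.
Proof.
  intros Hb [H1 H2].
  assert (Rabs (b * y) < 1).
  { rewrite Rabs_mult. assert (Rabs y <= 1) by (apply Rabs_le; lra).
    assert (Rabs b < 1) by (apply Rabs_def1; lra).
    pose proof (Rabs_pos b). pose proof (Rabs_pos y). nra. }
  pose proof (Rle_abs (b * y)). lra.
Qed.

Lemma mob_I b : -1 < b < 1 -> forall y, I11 y -> I11 (mob b y).
Proof.
  intros Hb y Hy. pose proof (m_pos b y Hb Hy). destruct Hy as [H1 H2]. unfold mob.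
  assert (0 <= (y + 1) * (1 - b)) by (apply Rmult_le_pos; lra).
  assert (0 <= (1 - y) * (1 + b)) by (apply Rmult_le_pos; lra). split.
  - apply Rmult_le_reg_r with (1 - b * y); auto. unfold Rdiv.
    rewrite Rmult_assoc, Rinv_l by lra. nra.
  - apply Rmult_le_reg_r with (1 - b * y); auto. unfold Rdiv.
    rewrite Rmult_assoc, Rinv_l by lra. nra.
Qed.

Definition dmob (b y : R) : R := (1 - b * b) * / (1 - b * y) * / (1 - b * y).

Lemma mob_deriv b y : 0 < 1 - b * y -> derivable_pt_lim (mob b) y (dmob b y).
Proof.
  intros H. apply is_derive_Reals. unfold mob, dmob. auto_derive; [lra|]. field. lra.
Qed.

Lemma Eb_Do b c y : 0 < 1 - b * y ->
  Do (Eb b c) (fun x => RtoC (- b / (1 - b * x)) * c * Eb b c x)%C y.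
Proof.
  intros H. apply (Do_elem _ (RtoC (- b / (1 - b * y)) * c * Eb b c y)%C).
  - apply cp_deriv_re; auto.
  - apply cp_deriv_im; auto.
  - reflexivity.
Qed.

Lemma Eb_m1 b c y : 0 < 1 - b * y -> Eb b (c + - RtoC 1)%C y = (Eb b c y * RtoC (/ (1 - b * y)))%C.
Proof. intros H. unfold Eb. rewrite cp_add, cp_m1; auto. Qed.

Definition T0 (b : R) (c : C) (f : R -> C) (y : R) : C := (Eb b c y * f (mob b y))%C.
Definition TD (b : R) (c : C) (f f' : R -> C) (y : R) : C :=
  (RtoC (- b) * c * T0 b (c + - RtoC 1) f y
   + RtoC (1 - b * b) * T0 b (c + - RtoC 1 + - RtoC 1) f' y)%C.

Lemma Do_T b c f f' y : -1 < b < 1 -> (forall x, I11 x -> Do f f' x) -> I11 y ->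
  Do (T0 b c f) (TD b c f f') y.
Proof.
  intros Hb Df Hy. pose proof (m_pos b y Hb Hy) as Hm.
  apply (Do_mult (Eb b c) (fun x => RtoC (- b / (1 - b * x)) * c * Eb b c x)%C
       (fun x => f (mob b x)) (fun x => f' (mob b x) * RtoC (dmob b x))%C).
  + apply Eb_Do; auto.
  + apply (Do_chain f f' (mob b) (dmob b y)); auto.
    * apply mob_deriv; auto.
    * apply mob_I; auto.
    * apply Df. apply mob_I; auto.
  + unfold TD, T0. rewrite !Eb_m1 by auto. unfold dmob, Rdiv.
    rewrite !RtoC_mult, RtoC_minus, RtoC_mult. ring.
Qed.

Definition TD2 (b : R) (c : C) (f f' f'' : R -> C) (x : R) : C :=
  (RtoC (- b) * c * TD b (c + - RtoC 1) f f' x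
   + RtoC (1 - b * b) * TD b (c + - RtoC 1 + - RtoC 1) f' f'' x)%C.

Lemma Do_TD b c f f' f'' y : -1 < b < 1 -> (forall x, I11 x -> Do f f' x) ->
  (forall x, I11 x -> Do f' f'' x) -> I11 y ->
  Do (TD b c f f')
     (fun x => RtoC (- b) * c * TD b (c + - RtoC 1) f f' x
       + RtoC (1 - b * b) * TD b (c + - RtoC 1 + - RtoC 1) f' f'' x)%C y.
Proof.
  intros Hb D1 D2 Hy. unfold TD at 1.
  apply (Do_plus _ (fun x => RtoC (- b) * c * TD b (c + - RtoC 1) f f' x)%C
                 _ (fun x => RtoC (1 - b * b) * TD b (c + - RtoC 1 + - RtoC 1) f' f'' x)%C).
  - apply (Do_scal _ (TD b (c + - RtoC 1) f f')); [apply Do_T; auto | reflexivity].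
  - apply (Do_scal _ (TD b (c + - RtoC 1 + - RtoC 1) f' f'')); [apply Do_T; auto | reflexivity].
  - reflexivity.
Qed.

Lemma Cn_T b : -1 < b < 1 -> forall n f, Cn n f -> forall c, Cn n (T0 b c f).
Proof.
  intros Hb n. induction n as [|n IH]; simpl; auto.
  intros f [f' [Df Cf]] c.
  exists (TD b c f f'). split.
  - intros y Hy. apply Do_T; auto.
  - apply Cn_plus; apply Cn_scal; apply IH; auto.
    apply Cn_S; simpl; exists f'; auto.
Qed.
Open Scope R_scope.

Definition ode1v (alpha : R) (lam : C) (y : R) (v0 v1 v2 : C) : C :=
    let q := RtoC (1 + sqrt (1 - alpha) * y) in
    (Cplus (Cplus
      (Cmult (Cminus (Cplus (Cmult lam lam) lam)
                     (Cdiv (Cmult (RtoC (2 * alpha)) lam) q)) v0)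
      (Cmult (Cmult (Cminus (Cplus (Cmult (RtoC 2) lam) (RtoC 2))
                            (Cdiv (RtoC (2 * alpha)) q)) (RtoC y)) v1))
      (Cmult (RtoC (y ^ 2 - 1)) v2)).

Definition ode2v (alpha : R) (lam : C) (y : R) (v0 v1 v2 : C) : C :=
    (Cplus (Cplus
      (Cmult (Cminus (Cmult lam lam) lam) v0)
      (Cmult (Cplus (Cmult (RtoC 2) (Cmult lam (RtoC y))) (RtoC (2 * sqrt (1 - alpha))))
             v1))
      (Cmult (RtoC (y ^ 2 - 1)) v2)).

Lemma ode1_iff alpha lam f f1 f2 :
  ode1 alpha lam f f1 f2 <-> forall y, I11 y -> ode1v alpha lam y (f y) (f1 y) (f2 y) = RtoC 0.
Proof. reflexivity. Qed.

Lemma alg2 (alpha a y : R) (lam P v0 v1 v2 w0 w1 w2 : C) :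
  sqrt (1 - alpha) = a -> alpha = 1 - a * a -> 0 < alpha -> 0 < 1 - a * y ->
  w0 = (P * v0)%C ->
  w1 = (RtoC (- a) * (- lam) * (P * RtoC (/ (1 - a * y)) * v0)
        + RtoC (1 - a * a) * (P * RtoC (/ (1 - a * y)) * RtoC (/ (1 - a * y)) * v1))%C ->
  w2 = (RtoC (- a) * (- lam) * (RtoC (- a) * (- lam + - RtoC 1) * (P * RtoC (/ (1 - a * y)) * RtoC (/ (1 - a * y)) * v0)
          + RtoC (1 - a * a) * (P * RtoC (/ (1 - a * y)) * RtoC (/ (1 - a * y)) * RtoC (/ (1 - a * y)) * v1))
        + RtoC (1 - a * a) * (RtoC (- a) * (- lam + - RtoC 1 + - RtoC 1) * (P * RtoC (/ (1 - a * y)) * RtoC (/ (1 - a * y)) * RtoC (/ (1 - a * y)) * v1)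
          + RtoC (1 - a * a) * (P * RtoC (/ (1 - a * y)) * RtoC (/ (1 - a * y)) * RtoC (/ (1 - a * y)) * RtoC (/ (1 - a * y)) * v2)))%C ->
  ode2v alpha lam y w0 w1 w2 =
    (RtoC alpha * P * RtoC (/ (1 - a * y)) * RtoC (/ (1 - a * y)) * ode1v alpha lam (mob a y) v0 v1 v2)%C.
Proof.
  intros Hs Ha Hp Hm E0 E1 E2. subst w0 w1 w2. unfold ode1v, ode2v, mob. rewrite Hs.
  assert (Hm' : 1 - a * y <> 0) by lra.
  assert (Hq : 1 + a * ((y - a) / (1 - a * y)) = alpha / (1 - a*y)).
  { rewrite Ha. field. lra. }
  rewrite Hq. rewrite (RtoC_div alpha) by lra. rewrite !RtoC_inv by lra.
  subst alpha.
  assert (HC : RtoC (1 - a * y) <> RtoC 0) by (intro H; apply Hm'; injection H; auto).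
  assert (HC2 : RtoC (1 - a * a) <> RtoC 0) by (intro H; injection H; lra).
  rewrite !RtoC_minus, !RtoC_mult, !RtoC_pow, !RtoC_minus, !RtoC_mult in *.
  rewrite !(RtoC_div (y - a)) by lra.
  rewrite !RtoC_minus, !RtoC_mult, ?RtoC_opp in *.
  field. split; auto.
Qed.
Lemma ode2_iff alpha lam f f1 f2 :
  ode2 alpha lam f f1 f2 <-> forall y, I11 y -> ode2v alpha lam y (f y) (f1 y) (f2 y) = RtoC 0.
Proof. reflexivity. Qed.

Lemma mob_inv1 a z : -1 < a < 1 -> I11 z -> mob a (mob (- a) z) = z.
Proof.
  intros Ha Hz. pose proof (m_pos (- a) z ltac:(lra) Hz) as Hm. unfold mob.
  assert (1 - a * a <> 0) by nra.
  field. lra.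
Qed.

Lemma mob_inv2 a y : -1 < a < 1 -> I11 y -> mob (- a) (mob a y) = y.
Proof.
  intros Ha Hy. pose proof (m_pos a y Ha Hy) as Hm. unfold mob.
  assert (1 - a * a <> 0) by nra.
  field. split; [lra|].
  replace (1 - a * y - - a * (y - a)) with (1 - a * a) by ring. auto.
Qed.

Lemma prod_alpha a y : 0 < 1 - a * y -> (1 - a * y) * (1 - - a * mob a y) = 1 - a * a.
Proof. intros H. unfold mob. field. lra. Qed.

Lemma RtoC_nz x : x <> 0 -> RtoC x <> RtoC 0.
Proof. intros H E. apply H. injection E. auto. Qed.

Lemma Cmult_cancel0 (k z : C) : k <> RtoC 0 -> (k * z)%C = RtoC 0 -> z = RtoC 0.
Proof.
  intros Hk E. replace z with (/ k * (k * z))%C by (field; auto). rewrite E. ring.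
Qed.

Lemma ode2v_scal alpha lam y k u0 u1 u2 :
  ode2v alpha lam y (k * u0) (k * u1) (k * u2) = (k * ode2v alpha lam y u0 u1 u2)%C.
Proof. unfold ode2v. ring. Qed.

Theorem corollary3p1 (alpha : R) (lam : C) :
  0 < alpha <= 1 -> (eigen_L alpha lam <-> eigen_L' alpha lam).
Proof.
  intros [H0 H1].
  set (a := sqrt (1 - alpha)).
  assert (Ha0 : 0 <= a) by apply sqrt_pos.
  assert (Haa : a * a = 1 - alpha) by (apply sqrt_sqrt; lra).
  assert (Ha1 : a < 1) by nra.
  assert (Hb : -1 < a < 1) by lra. assert (Hb' : -1 < - a < 1) by lra.
  assert (Hs : sqrt (1 - alpha) = a) by reflexivity.
  assert (Hal : alpha = 1 - a * a) by lra.
  assert (KEY : forall D, deriv_tower D -> forall y, I11 y ->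
    Do (T0 a (- lam) (D O)) (TD a (- lam) (D O) (D 1%nat)) y /\
    Do (TD a (- lam) (D O) (D 1%nat))
       (TD2 a (- lam) (D O) (D 1%nat) (D 2%nat)) y /\
    ode2v alpha lam y (T0 a (- lam) (D O) y) (TD a (- lam) (D O) (D 1%nat) y)
       (TD2 a (- lam) (D O) (D 1%nat) (D 2%nat) y)
    = (RtoC alpha * Eb a (- lam) y * RtoC (/ (1 - a * y)) * RtoC (/ (1 - a * y))
        * ode1v alpha lam (mob a y) (D O (mob a y)) (D 1%nat (mob a y)) (D 2%nat (mob a y)))%C).
  { intros D Tw y Hy.
    assert (DD : forall n x, I11 x -> Do (D n) (D (S n)) x) by (intros; apply hd_Do, Tw; auto).
    pose proof (m_pos a y Hb Hy) as Hm.
    split; [apply Do_T; auto|]. split; [apply Do_TD; auto|].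
    apply alg2; auto; unfold TD2, TD, T0; rewrite ?Eb_m1 by auto; ring. }
  split.
  - intros [D [Tw [[z0 [Hz0 Hnz]] HO]]].
    assert (Cs : forall n, Cn n (T0 a (- lam) (D O))).
    { intro n. apply Cn_T; auto. apply tower_Cn; auto. }
    destruct (Cn_smooth _ Cs) as [E [Tw' HE0]].
    assert (DE : forall n x, I11 x -> Do (E n) (E (S n)) x) by (intros; apply hd_Do, Tw'; auto).
    exists E. split; auto. split.
    + exists (mob (- a) z0). split; [apply mob_I; auto|].
      rewrite HE0 by (apply mob_I; auto). unfold T0. rewrite mob_inv1 by auto.
      apply Cmult_neq_0; auto. apply cp_nz.
    + assert (E1 : forall x, I11 x -> E 1%nat x = TD a (- lam) (D O) (D 1%nat) x).
      { intros x Hx. apply (Do_unique (T0 a (- lam) (D O)) (E 1%nat) (TD a (- lam) (D O) (D 1%nat))); auto.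
        - eapply Do_ext; [exact HE0 | auto | reflexivity | apply DE; auto].
        - apply KEY; auto. }
      apply ode2_iff. intros y Hy.
      destruct (KEY D Tw y Hy) as [K1 [K2 K3]].
      assert (E2 : E 2%nat y = (TD2 a (- lam) (D O) (D 1%nat) (D 2%nat) y)).
      { apply (Do_unique (TD a (- lam) (D O) (D 1%nat)) (E 2%nat) (TD2 a (- lam) (D O) (D 1%nat) (D 2%nat))); auto.
        eapply Do_ext; [exact E1 | auto | reflexivity | apply DE; auto]. }
      rewrite HE0, E1, E2 by auto. rewrite K3.
      rewrite (proj1 (ode1_iff _ _ _ _ _) HO (mob a y) (mob_I a Hb y Hy)). ring.
  - intros [E [Tw [[y0 [Hy0 Hnz]] HO]]].
    set (phi := T0 (- a) (- lam) (E O)).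
    assert (Cs : forall n, Cn n phi).
    { intro n. apply Cn_T; auto. apply tower_Cn; auto. }
    destruct (Cn_smooth _ Cs) as [D [TwD HD0]].
    assert (DE : forall n x, I11 x -> Do (E n) (E (S n)) x) by (intros; apply hd_Do, Tw; auto).
    set (kappa := cp alpha (- lam)).
    assert (HP0 : forall y, I11 y -> T0 a (- lam) (D O) y = (kappa * E O y)%C).
    { intros y Hy. pose proof (m_pos a y Hb Hy) as Hm.
      pose proof (m_pos (- a) (mob a y) Hb' (mob_I a Hb y Hy)) as Hm2.
      unfold T0. rewrite HD0 by (apply mob_I; auto). unfold phi, T0.
      rewrite mob_inv2 by auto. rewrite Cmult_assoc. unfold Eb. rewrite <- cp_mul by auto.
      rewrite prod_alpha by auto. unfold kappa. rewrite Hal. reflexivity. }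
    assert (HP1 : forall y, I11 y -> TD a (- lam) (D O) (D 1%nat) y = (kappa * E 1%nat y)%C).
    { intros y Hy. apply (Do_unique (T0 a (- lam) (D O)) (TD a (- lam) (D O) (D 1%nat)) (fun x => kappa * E 1%nat x)%C); auto.
      - apply KEY; auto.
      - apply (Do_ext (fun x => kappa * E O x)%C (fun x => kappa * E 1%nat x)%C);
          [intros x Hx; symmetry; apply HP0; auto | auto | reflexivity |].
        apply (Do_scal (E O) (E 1%nat)); [apply DE; auto | reflexivity]. }
    assert (HP2 : forall y, I11 y ->
       (TD2 a (- lam) (D O) (D 1%nat) (D 2%nat) y)
       = (kappa * E 2%nat y)%C).
    { intros y Hy. apply (Do_unique (TD a (- lam) (D O) (D 1%nat)) (TD2 a (- lam) (D O) (D 1%nat) (D 2%nat)) (fun x => kappa * E 2%nat x)%C); auto.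
      - apply KEY; auto.
      - apply (Do_ext (fun x => kappa * E 1%nat x)%C (fun x => kappa * E 2%nat x)%C);
          [intros x Hx; symmetry; apply HP1; auto | auto | reflexivity |].
        apply (Do_scal (E 1%nat) (E 2%nat)); [apply DE; auto | reflexivity]. }
    exists D. split; auto. split.
    + exists (mob a y0). split; [apply mob_I; auto|].
      intro Z. apply Hnz.
      apply (Cmult_cancel0 kappa); [apply cp_nz|].
      rewrite <- HP0 by auto. unfold T0. rewrite Z. ring.
    + apply ode1_iff. intros z Hz.
      set (y := mob (- a) z).
      assert (Hy : I11 y) by (apply mob_I; auto).
      assert (Hyz : mob a y = z) by (apply mob_inv1; auto).
      pose proof (m_pos a y Hb Hy) as Hm.
      destruct (KEY D TwD y Hy) as [K1 [K2 K3]].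
      rewrite HP0, HP1, HP2, ode2v_scal in K3 by auto.
      rewrite (proj1 (ode2_iff _ _ _ _ _) HO y Hy) in K3.
      rewrite <- Hyz.
      rewrite Cmult_0_r in K3. symmetry in K3. apply Cmult_cancel0 in K3; [exact K3|].
      repeat apply Cmult_neq_0.
      * apply RtoC_nz; lra.
      * apply cp_nz.
      * apply RtoC_nz. apply Rinv_neq_0_compat; lra.
      * apply RtoC_nz. apply Rinv_neq_0_compat; lra.
Qed.
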